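(* Let $L$ be any linear order. The following are equivalent: (1) $ML/\!\sim_\omega\;\cong M$ for every linear order $M$; (2) $L/\!\sim_\omega\;\cong 1$ and ($\operatorname{cf}(L)=\omega_1$ or $\operatorname{cf}^*(L)=\omega_1$); (3) $L/\!\sim_\omega\;\cong 1$ and ($L$ has no countable tail or $L$ has no countable head); (4) $L$ embeds into $U$ and $L$ has a strictly monotone sequence of length $\omega_1$; (5) $L$ is isomorphic to an uncountable suborder of $U$.
   Context: The countable condensation $\sim_\omega$ on a linear order $L$: $x\sim_\omega y$ iff the closed interval between $x$ and $y$ is countable; $L/\!\sim_\omega$ is the linear order of its classes (which are intervals). $ML$ denotes the lexicographic product: the linear order obtained by replacing each element $m\in M$ by a copy $L_m$ of $L$ (order on $M\times L$ compared first by the $M$-coordinate). $\operatorname{cf}(L)$ is the least length of a strictly increasing cofinal sequence in $L$; $\operatorname{cf}^*(L)$ the least length of a strictly decreasing coinitial sequence. A tail of $L$ is a final segment $T$ with $L=L'+T$; a head is an initial segment $H$ with $L=H+L'$. $U$ is the linear order $R^*+\mathbb{Q}+R$, where $R$ is obtained from $\omega_1$ by replacing each $\alpha<\omega_1$ with a point $u_\alpha$ followed by a copy $\mathbb{Q}(\alpha)$ of the rationals (so $u_\alpha<\mathbb{Q}(\alpha)<u_{\alpha+1}$), $R^*$ is the reverse of $R$, and the middle $\mathbb{Q}$ is a copy of the rationals. *)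

(* Defs.v *)
From mathcomp Require Import all_boot all_order all_algebra.
Import Order.TTheory GRing.Theory Num.Theory.

Set Implicit Arguments.
Unset Strict Implicit.
Unset Printing Implicit Defensive.

Definition strict_linear (T : Type) (lt : T -> T -> Prop) : Prop :=
  (forall x, ~ lt x x) /\
  (forall x y z, lt x y -> lt y z -> lt x z) /\
  (forall x y, lt x y \/ x = y \/ lt y x).

Definition leo (T : Type) (lt : T -> T -> Prop) (x y : T) : Prop :=
  lt x y \/ x = y.

Definition countable_set (T : Type) (A : T -> Prop) : Prop :=
  exists f : T -> nat, forall a b, A a -> A b -> f a = f b -> a = b.

Definition incr (A B : Type) (ltA : A -> A -> Prop) (ltB : B -> B -> Prop)
  (f : A -> B) : Prop := forall x y, ltA x y -> ltB (f x) (f y).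

Definition decr (A B : Type) (ltA : A -> A -> Prop) (ltB : B -> B -> Prop)
  (f : A -> B) : Prop := forall x y, ltA x y -> ltB (f y) (f x).

Definition order_iso (A B : Type) (ltA : A -> A -> Prop) (ltB : B -> B -> Prop)
  : Prop :=
  exists f : A -> B,
    (forall x y, f x = f y -> x = y) /\ (forall b, exists a, f a = b) /\
    (forall x y, ltA x y <-> ltB (f x) (f y)).

Definition order_embeds (A B : Type) (ltA : A -> A -> Prop)
  (ltB : B -> B -> Prop) : Prop :=
  exists f : A -> B, forall x y, ltA x y <-> ltB (f x) (f y).

Definition rev_lt (T : Type) (lt : T -> T -> Prop) (x y : T) : Prop := lt y x.

Definition one_lt (x y : unit) : Prop := False.

(** lexicographic product ML on M * L (compare first by the M-coordinate) *)
Definition lex_lt (M L : Type) (ltM : M -> M -> Prop) (ltL : L -> L -> Prop)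
  (p q : M * L) : Prop :=
  ltM p.1 q.1 \/ (p.1 = q.1 /\ ltL p.2 q.2).

Definition sum_lt (A B : Type) (ltA : A -> A -> Prop) (ltB : B -> B -> Prop)
  (p q : A + B) : Prop :=
  match p, q with
  | inl a, inl a' => ltA a a'
  | inl _, inr _ => True
  | inr _, inl _ => False
  | inr b, inr b' => ltB b b'
  end.

Definition sub_lt (T : Type) (lt : T -> T -> Prop) (S : T -> Prop)
  (x y : {t : T | S t}) : Prop := lt (proj1_sig x) (proj1_sig y).

Definition cint (T : Type) (lt : T -> T -> Prop) (x y : T) (z : T) : Prop :=
  (leo lt x z /\ leo lt z y) \/ (leo lt y z /\ leo lt z x).

Definition csim (T : Type) (lt : T -> T -> Prop) (x y : T) : Prop :=
  countable_set (cint lt x y).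

Definition cclass (T : Type) (lt : T -> T -> Prop) : Type :=
  {C : T -> Prop | exists x, C = csim lt x}.

(** order of classes (which are intervals): C < D iff C <> D and some
    element of C lies below some element of D *)
Definition cclass_lt (T : Type) (lt : T -> T -> Prop) (C D : cclass lt)
  : Prop :=
  proj1_sig C <> proj1_sig D /\
  exists x y, proj1_sig C x /\ proj1_sig D y /\ lt x y.

Definition cquot_iso (T M : Type) (lt : T -> T -> Prop) (ltM : M -> M -> Prop)
  : Prop := order_iso (cclass_lt (lt:=lt)) ltM.

Definition well_order (T : Type) (lt : T -> T -> Prop) : Prop :=
  strict_linear lt /\ well_founded lt.

Definition is_omega1 (W : Type) (ltW : W -> W -> Prop) : Prop :=
  well_order ltW /\ ~ countable_set (fun _ : W => True) /\
  forall w, countable_set (fun v => ltW v w).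

Definition cofinal (A L : Type) (ltL : L -> L -> Prop) (f : A -> L) : Prop :=
  forall y : L, exists a, leo ltL y (f a).

Definition cf_omega1 (W : Type) (ltW : W -> W -> Prop)
  (L : Type) (ltL : L -> L -> Prop) : Prop :=
  (exists f : W -> L, incr ltW ltL f /\ cofinal ltL f) /\
  forall (A : Type) (ltA : A -> A -> Prop),
    well_order ltA -> countable_set (fun _ : A => True) ->
    ~ exists f : A -> L, incr ltA ltL f /\ cofinal ltL f.

Definition cfstar_omega1 (W : Type) (ltW : W -> W -> Prop)
  (L : Type) (ltL : L -> L -> Prop) : Prop :=
  cf_omega1 ltW (rev_lt ltL).

Definition is_tail (L : Type) (lt : L -> L -> Prop) (T : L -> Prop) : Prop :=
  (exists x, T x) /\ forall x y, T x -> lt x y -> T y.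

Definition is_head (L : Type) (lt : L -> L -> Prop) (H : L -> Prop) : Prop :=
  (exists x, H x) /\ forall x y, H y -> lt x y -> H x.

(** R: each alpha < omega_1 replaced by u_alpha (None) followed by a copy
    Q(alpha) of the rationals (Some q). *)
Definition ptQ_lt (a b : option rat) : Prop :=
  match a, b with
  | None, Some _ => True
  | Some q, Some q' => (q < q')%R
  | _, _ => False
  end.

Definition R_lt (W : Type) (ltW : W -> W -> Prop) : W * option rat -> W * option rat -> Prop :=
  lex_lt ltW ptQ_lt.

Definition rat_lt (q q' : rat) : Prop := (q < q')%R.

Definition U_type (W : Type) : Type :=
  ((W * option rat) + (rat + (W * option rat)))%type.

Definition U_lt (W : Type) (ltW : W -> W -> Prop) : U_type W -> U_type W -> Prop :=
  sum_lt (rev_lt (R_lt ltW)) (sum_lt rat_lt (R_lt ltW)).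

(* Main.v *)
Require Import Defs.
From mathcomp Require Import all_boot all_order all_algebra.
From Stdlib Require Import Classical ClassicalEpsilon FunctionalExtensionality PropExtensionality ProofIrrelevance.
From mathcomp Require Import lra.

Set Implicit Arguments.
Unset Strict Implicit.
Unset Printing Implicit Defensive.

Section Count.
Variable T : Type.

Lemma count_sub (A B : T -> Prop) : (forall x, A x -> B x) ->
  countable_set B -> countable_set A.
Proof. move=> AB [f hf]; exists f => a b Ha Hb; exact: hf (AB _ Ha) (AB _ Hb). Qed.

Lemma count_type (K : countType) (A : T -> Prop) (h : T -> K) :
  (forall a b, A a -> A b -> h a = h b -> a = b) -> countable_set A.
Proof.
move=> hi; exists (fun x => pickle (h x)) => a b Ha Hb e.
apply: hi => //; exact: (pcan_inj (@pickleK K)) e.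
Qed.

Lemma count_preim (U : Type) (A : T -> Prop) (B : U -> Prop) (f : T -> U) :
  (forall a, A a -> B (f a)) ->
  (forall a b, A a -> A b -> f a = f b -> a = b) ->
  countable_set B -> countable_set A.
Proof.
move=> AB fi [g hg]; exists (fun x => g (f x)) => a b Ha Hb e.
by apply: fi => //; apply: hg => //; apply: AB.
Qed.

Definition dec (P : Prop) : bool :=
  if excluded_middle_informative P then true else false.

Lemma decP (P : Prop) : dec P = true <-> P.
Proof. by rewrite /dec; case: excluded_middle_informative. Qed.

Lemma decT (P : Prop) : P -> dec P = true.
Proof. by move=> p; apply/decP. Qed.
Lemma decF (P : Prop) : ~ P -> dec P = false.
Proof. by move=> np; case E: dec => //; move/decP: E. Qed.

Lemma count_union (A B : T -> Prop) : countable_set A -> countable_set B ->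
  countable_set (fun x => A x \/ B x).
Proof.
move=> [f hf] [g hg].
apply: (@count_type (bool * nat)%type _
           (fun x => if dec (A x) then (true, f x) else (false, g x))).
move=> a b Ha Hb.
have dT : forall P, P -> dec P = true by move=> P p; apply/decP.
have dF : forall P, ~ P -> dec P = false.
  by move=> P np; case E: dec => //; move/decP: E.
case: (classic (A a)) => Aa; case: (classic (A b)) => Ab.
- rewrite (dT _ Aa) (dT _ Ab) => [[]]; exact: hf.
- by rewrite (dT _ Aa) (dF _ Ab).
- by rewrite (dF _ Aa) (dT _ Ab).
- rewrite (dF _ Aa) (dF _ Ab) => [[]]; apply: hg; [case: Ha | case: Hb] => //.
Qed.

Lemma count_bigU (I : Type) (CI : I -> Prop) (A : I -> T -> Prop) :
  countable_set CI -> (forall i, CI i -> countable_set (A i)) ->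
  countable_set (fun x => exists i, CI i /\ A i x).
Proof.
move=> [g hg] hA.
have hA' : forall i, exists f : T -> nat, CI i ->
    forall a b, A i a -> A i b -> f a = f b -> a = b.
  move=> i; case: (classic (CI i)) => ci.
    by case: (hA i ci) => f hf; exists f.
  by exists (fun _ => 0%N).
pose F i := proj1_sig (constructive_indefinite_description _ (hA' i)).
have hF i : CI i -> forall a b, A i a -> A i b -> F i a = F i b -> a = b.
  exact: (proj2_sig (constructive_indefinite_description _ (hA' i))).
case: (classic (exists x, exists i, CI i /\ A i x)); last first.
  by move=> nx; exists (fun _ => 0%N) => a b Ha; case: nx; exists a.
move=> [x0 [i0 _]].
have hi : forall x, exists i, (exists i, CI i /\ A i x) -> CI i /\ A i x.
  move=> x; case: (classic (exists i, CI i /\ A i x)) => [[i hi]|nx].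
    by exists i.
  by exists i0.
pose ix x := proj1_sig (constructive_indefinite_description _ (hi x)).
have hix x : (exists i, CI i /\ A i x) -> CI (ix x) /\ A (ix x) x.
  exact: (proj2_sig (constructive_indefinite_description _ (hi x))).
apply: (@count_type (nat * nat)%type _
           (fun x => (g (ix x), F (ix x) x))).
move=> a b Ha Hb [e1 e2].
have [Ca Aa] := hix a Ha; have [Cb Ab] := hix b Hb.
have ei : ix a = ix b by apply: hg.
rewrite -ei in Ab e2.
exact: (hF _ Ca _ _ Aa Ab e2).
Qed.

Lemma count_single (x : T) : countable_set (fun y => y = x).
Proof. by exists (fun _ => 0%N) => a b -> ->. Qed.

End Count.

Lemma count_image (T U : Type) (A : T -> Prop) (f : T -> U) :
  countable_set A -> countable_set (fun y => exists a, A a /\ f a = y).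
Proof.
move=> cA.
have := @count_bigU U T A (fun a y => f a = y) cA.
apply => a _; exists (fun _ => 0%N) => x y <- <- //.
Qed.

Section Omega1.
Variables (W : Type) (ltW : W -> W -> Prop) (HW : is_omega1 ltW).

Lemma W_lin : strict_linear ltW.
Proof. by case: HW => [[]]. Qed.

Lemma W_wf : well_founded ltW.
Proof. by case: HW => [[]]. Qed.

Lemma W_inh : exists w : W, True.
Proof.
case: (classic (exists w : W, True)) => // nw.
case: HW => _ [nc _]; case: nc; exists (fun _ => 0%N) => a; case: nw; by exists a.
Qed.

Lemma W_upper (w : W) : ~ countable_set (fun v => ltW w v).
Proof.
move=> cu; case: HW => [[_ _]] [nc hc].
apply: nc; apply: (@count_sub _ _ (fun v => (ltW v w \/ v = w) \/ ltW w v)).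
  move=> v _; case: W_lin => _ [_ /(_ v w)]; tauto.
apply: count_union => //; apply: count_union => //; exact: count_single.
Qed.

Lemma W_nomax (w : W) : exists v, ltW w v.
Proof.
case: (classic (exists v, ltW w v)) => // nv; exfalso; apply: (@W_upper w).
by exists (fun _ => 0%N) => a b Ha; case: nv; exists a.
Qed.

Lemma W_min (Q : W -> Prop) : (exists w, Q w) ->
  exists w, Q w /\ forall v, ltW v w -> ~ Q v.
Proof.
move=> [w Qw]; apply: NNPP => nm; move: Qw; elim/(well_founded_ind W_wf): w.
move=> w IH Qw; apply: nm; exists w; split => // v lv Qv; exact: IH lv Qv.
Qed.

Lemma rec_seq (X : Type) (lt : X -> X -> Prop) (P : X -> Prop) :
  (forall C : X -> Prop, countable_set C -> (forall c, C c -> P c) ->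
      exists x, P x /\ forall c, C c -> lt c x) ->
  exists f : W -> X, (forall w, P (f w)) /\ incr ltW lt f.
Proof.
move=> H.
have [x0 _] := H (fun _ => False) ltac:(by exists (fun _ => 0%N)) ltac:(by []).
have iX : inhabited X by constructor.
pose F (w : W) (r : forall v, ltW v w -> X) : X :=
  epsilon iX (fun x => P x /\ forall v (h : ltW v w), lt (r v h) x).
pose f := Fix W_wf (fun _ => X) F.
have fE w : f w = F w (fun v _ => f v).
  rewrite /f Fix_eq // => w' r1 r2 e.
  have -> : r1 = r2 by apply: functional_extensionality_dep => v;
     apply: functional_extensionality_dep => h; exact: e.
  by [].
have key : forall w, P (f w) /\ forall v, ltW v w -> lt (f v) (f w).
  elim/(well_founded_ind W_wf) => w IH.
  rewrite fE /F.
  set Q := (fun x => _).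
  have : exists x, Q x.
    have cC : countable_set (fun y => exists v, ltW v w /\ f v = y).
      apply: count_image; by case: HW => _ [_].
    have [x [Px hx]] := H _ cC ltac:(by move=> c [v [lv <-]]; case: (IH v lv)).
    exists x; split => // v h; apply: hx; by exists v.
  move/(epsilon_spec iX Q) => [Pe he]; split => // v lv; exact: he.
by exists f; split => [w|v w lvw]; [case: (key w) | case: (key w) => _; apply].
Qed.

End Omega1.
Definition AllC (X : Type) (lt : X -> X -> Prop) := forall x y, csim lt x y.

Section Lin.
Variables (X : Type) (lt : X -> X -> Prop) (HX : strict_linear lt).

Lemma lin_irr x : ~ lt x x. Proof. by case: HX. Qed.
Lemma lin_trans x y z : lt x y -> lt y z -> lt x z.
Proof. by case: HX => _ [h _]; apply: h. Qed.
Lemma lin_tri x y : lt x y \/ x = y \/ lt y x.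
Proof. by case: HX => _ [_ h]; apply: h. Qed.
Lemma lin_asym x y : lt x y -> ~ lt y x.
Proof. move=> a b; exact: lin_irr (lin_trans a b). Qed.
Lemma lin_nlt x y : ~ lt x y -> leo lt y x.
Proof. rewrite /leo => n; case: (lin_tri x y) => [//|[->|]]; tauto. Qed.

Lemma rev_lin : strict_linear (rev_lt lt).
Proof.
rewrite /rev_lt; split; [|split].
- exact: lin_irr.
- move=> x y z a b; exact: lin_trans b a.
- move=> x y; case: (lin_tri x y); tauto.
Qed.

Lemma cint_rev x y z : cint (rev_lt lt) x y z <-> cint lt x y z.
Proof. rewrite /cint /leo /rev_lt; split => H; intuition subst; tauto. Qed.

Lemma csim_rev x y : csim (rev_lt lt) x y <-> csim lt x y.
Proof.
split; apply: count_sub => z; by move/cint_rev.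
Qed.

Lemma AllC_rev : AllC lt -> AllC (rev_lt lt).
Proof. by move=> h x y; apply/csim_rev. Qed.

Lemma csim_refl x : csim lt x x.
Proof.
apply: (@count_sub _ _ (fun z => z = x)); last exact: count_single.
move=> z; rewrite /cint /leo => H; intuition subst => //; exfalso;
  exact: lin_irr (lin_trans H0 H).
Qed.

Lemma cquot_one : (exists x : X, True) -> AllC lt -> cquot_iso lt one_lt.
Proof.
move=> [x0 _] hA.
exists (fun _ => tt); split; [|split].
- move=> [C pC] [D pD] _.
  have e : C = D.
    case: pC => x ->; case: pD => y ->.
    apply: functional_extensionality => z; apply: propositional_extensionality.
    by split => _; apply: hA.
  subst D; by rewrite (proof_irrelevance _ pC pD).
- move=> []; by exists (exist _ (csim lt x0) (ex_intro _ x0 erefl)).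
- move=> [C [x eC]] [D [y eD]]; rewrite /one_lt /cclass_lt /=; split => //.
  move=> [ne _]; apply: ne; rewrite eC eD.
  apply: functional_extensionality => z; apply: propositional_extensionality.
  by split => _; apply: hA.
Qed.

Lemma cquot_one_inv : cquot_iso lt one_lt -> (exists x : X, True) /\ AllC lt.
Proof.
move=> [F [Fi [Fs _]]]; split.
  by case: (Fs tt) => [[C [x _]] _]; exists x.
move=> x y.
have e := Fi (exist _ (csim lt x) (ex_intro _ x erefl))
             (exist _ (csim lt y) (ex_intro _ y erefl)).
have := f_equal (@proj1_sig _ _) (e ltac:(by case: (F _); case: (F _))).
move=> /= ->; exact: csim_refl.
Qed.

Section Seq.
Variables (W : Type) (ltW : W -> W -> Prop) (HW : is_omega1 ltW).

Lemma incr_inj (f : W -> X) : incr ltW lt f -> forall a b, f a = f b -> a = b.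
Proof.
move=> fi a b e; case: (W_lin HW) => _ [_ /(_ a b)] [h|[//|h]];
  have := fi _ _ h; rewrite e => /lin_irr [].
Qed.

Lemma incr_cof (f : W -> X) : AllC lt -> incr ltW lt f ->
  forall y, exists w, lt y (f w).
Proof.
move=> hA fi y; apply: NNPP => nw.
have [w0 _] := W_inh HW.
apply: (@W_upper _ _ HW w0).
apply: (@count_preim _ _ _ (cint lt (f w0) y) f); last exact: hA.
- move=> v lv; left; split; first by left; apply: fi.
  apply: lin_nlt => h; apply: nw; by exists v.
- move=> a b _ _; exact: incr_inj.
Qed.

Lemma incr_tail (f : W -> X) : AllC lt -> incr ltW lt f ->
  forall T, is_tail lt T -> ~ countable_set T.
Proof.
move=> hA fi T [[x Tx] hT] cT.
have [w hw] := incr_cof hA fi x.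
apply: (@W_upper _ _ HW w).
apply: (@count_preim _ _ _ T f) => //.
- move=> v lv; apply: (hT x) => //; exact: lin_trans hw (fi _ _ lv).
- move=> a b _ _; exact: incr_inj.
Qed.

Lemma above_count : (exists x : X, True) -> AllC lt ->
  (forall T, is_tail lt T -> ~ countable_set T) ->
  forall C, countable_set C -> exists x, True /\ forall c, C c -> lt c x.
Proof.
move=> [x0 _] hA hT C cC; apply: NNPP => nx.
apply: (hT (fun x => leo lt x0 x)).
  split; first by exists x0; right.
  move=> x y [h|<-] h2; left => //; exact: lin_trans h h2.
apply: (@count_sub _ _ (fun x => exists c, C c /\ cint lt x0 c x)).
  move=> x h0; apply: NNPP => nc; apply: nx; exists x; split => // c Cc.
  apply: NNPP => nl; apply: nc; exists c; split => //.
  left; split => //; exact: lin_nlt.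
apply: count_bigU => // c _; exact: hA.
Qed.

Lemma tails_cf : (exists x : X, True) -> AllC lt ->
  (forall T, is_tail lt T -> ~ countable_set T) -> cf_omega1 ltW lt.
Proof.
move=> iX hA hT; split.
  have [f [_ fi]] := @rec_seq _ _ HW _ lt (fun _ => True) (fun C cC _ => above_count iX hA hT cC).
  exists f; split => // y; have [w hw] := incr_cof hA fi y; exists w; by left.
move=> A ltA _ cA [g [gi gc]].
have cC : countable_set (fun y => exists a, (fun _ => True) a /\ g a = y).
  exact: count_image.
have [x [_ hx]] := above_count iX hA hT cC.
have [a ha] := gc x.
have h := hx (g a) ltac:(by exists a).
case: ha => [h'|e]; first exact: lin_irr (lin_trans h h').
by rewrite e in h; apply: lin_irr h.
Qed.

Lemma cf_tails : AllC lt -> cf_omega1 ltW lt ->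
  forall T, is_tail lt T -> ~ countable_set T.
Proof. move=> hA [[f [fi _]] _]; exact: (incr_tail hA fi). Qed.

End Seq.
End Lin.
Section IntoQ.
Import Order.TTheory GRing.Theory Num.Theory.
Local Open Scope ring_scope.

Definition maxl (a : rat) (s : seq rat) := foldr Num.max a s.
Definition minl (a : rat) (s : seq rat) := foldr Num.min a s.

Lemma maxl_ub a s x : x \in a :: s -> x <= maxl a s.
Proof.
rewrite /maxl; elim: s x => [|b s IH] x; first by rewrite inE => /eqP->.
rewrite /= le_max !inE => /or3P [/eqP->|/eqP->|xs].
- by rewrite (IH a) ?inE ?eqxx ?orbT.
- by rewrite lexx.
- by rewrite (IH x) ?inE ?xs ?orbT.
Qed.

Lemma maxl_mem a s : maxl a s \in a :: s.
Proof.
rewrite /maxl; elim: s => [|b s IH] /=; first by rewrite inE.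
rewrite maxEle; case: ifP => _; rewrite !inE ?eqxx ?orbT //.
move: IH; rewrite inE => /orP [->|->]; by rewrite ?orbT.
Qed.

Lemma minl_lb a s x : x \in a :: s -> minl a s <= x.
Proof.
rewrite /minl; elim: s x => [|b s IH] x; first by rewrite inE => /eqP->.
rewrite /= ge_min !inE => /or3P [/eqP->|/eqP->|xs].
- by rewrite (IH a) ?inE ?eqxx ?orbT.
- by rewrite lexx.
- by rewrite (IH x) ?inE ?xs ?orbT.
Qed.

Lemma minl_mem a s : minl a s \in a :: s.
Proof.
rewrite /minl; elim: s => [|b s IH] /=; first by rewrite inE.
rewrite minEle; case: ifP => _; rewrite !inE ?eqxx ?orbT //.
move: IH; rewrite inE => /orP [->|->]; by rewrite ?orbT.
Qed.

Definition newval (los his : seq rat) : rat :=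
  match los, his with
  | [::], [::] => 0
  | a :: s, [::] => maxl a s + 1
  | [::], b :: t => minl b t - 1
  | a :: s, b :: t => (maxl a s + minl b t) / 2%:R
  end.

Lemma newval_spec los his :
  (forall l h, l \in los -> h \in his -> l < h) ->
  (forall l, l \in los -> l < newval los his) /\
  (forall h, h \in his -> newval los his < h).
Proof.
case: los => [|a s]; case: his => [|b t] //= H.
- split => // h /minl_lb; lra.
- split => // l /maxl_ub; lra.
- have := H _ _ (maxl_mem a s) (minl_mem b t) => lt.
  split => [l /maxl_ub|h /minl_lb]; lra.
Qed.

Variable R : nat -> nat -> Prop.
Hypothesis Rtr : forall i j k, R i j -> R j k -> R i k.
Hypothesis Rirr : forall i, ~ R i i.

Fixpoint build (n : nat) : seq rat :=
  match n with
  | 0%N => [::]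
  | n'.+1 => let s := build n' in
     rcons s (newval [seq nth 0 s i | i <- iota 0 n' & dec (R i n')]
                     [seq nth 0 s i | i <- iota 0 n' & dec (R n' i)])
  end.

Lemma size_build n : size (build n) = n.
Proof. by elim: n => //= n IH; rewrite size_rcons IH. Qed.

Lemma nth_build m i : (i < m)%N -> nth 0 (build m) i = nth 0 (build i.+1) i.
Proof.
elim: m => // m IH; rewrite ltnS leq_eqVlt => /orP [/eqP ->|lt] //.
by rewrite /= nth_rcons size_build lt IH.
Qed.

Lemma build_inv m : forall i j, (i < m)%N -> (j < m)%N -> R i j ->
  nth 0 (build m) i < nth 0 (build m) j.
Proof.
elim: m => // m IH i j.
set s := build m.
have newv := @newval_spec [seq nth 0 s i | i <- iota 0 m & dec (R i m)]
                     [seq nth 0 s i | i <- iota 0 m & dec (R m i)].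
have hlh : (forall l h, l \in [seq nth 0 s i | i <- iota 0 m & dec (R i m)] ->
           h \in [seq nth 0 s i | i <- iota 0 m & dec (R m i)] -> l < h).
  move=> l h /mapP [i' + ->] /mapP [j' + ->].
  rewrite !mem_filter !mem_iota /= => /andP [/decP r1 lt1] /andP [/decP r2 lt2].
  apply: IH => //; exact: Rtr r1 r2.
have [H1 H2] := newv hlh.
have eb : build m.+1 = rcons s (newval [seq nth 0 s i | i <- iota 0 m & dec (R i m)]
                     [seq nth 0 s i | i <- iota 0 m & dec (R m i)]) by [].
rewrite eb !nth_rcons size_build.
move=> hi hj; move: hi hj; rewrite !ltnS (leq_eqVlt i) (leq_eqVlt j).
move=> /orP [/eqP ei|li] /orP [/eqP ej|lj] r.
- by subst; case: (Rirr r).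
- rewrite lj ei ltnn eqxx; subst i; apply: H2; apply/mapP; exists j => //.
  by rewrite mem_filter mem_iota /= lj andbT; apply/decP.
- rewrite li ej ltnn eqxx; subst j; apply: H1; apply/mapP; exists i => //.
  by rewrite mem_filter mem_iota /= li andbT; apply/decP.
- by rewrite li lj; apply: IH.
Qed.

Lemma nat_into_Q : exists v : nat -> rat, forall i j, R i j -> v i < v j.
Proof.
exists (fun i => nth 0 (build i.+1) i) => i j r.
rewrite -(@nth_build (maxn i j).+1 i) ?ltnS ?leq_maxl //.
rewrite -(@nth_build (maxn i j).+1 j) ?ltnS ?leq_maxr //.
by apply: build_inv; rewrite ?ltnS ?leq_maxl ?leq_maxr.
Qed.

End IntoQ.
Arguments lin_irr [X lt] HX [x] _.
Arguments lin_nlt [X lt] HX [x y] _.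
Lemma mono_iff (X Y : Type) (lt : X -> X -> Prop) (lt' : Y -> Y -> Prop)
  (P : X -> Prop) (f : X -> Y) :
  strict_linear lt -> strict_linear lt' ->
  (forall x y, P x -> P y -> lt x y -> lt' (f x) (f y)) ->
  forall x y, P x -> P y -> (lt x y <-> lt' (f x) (f y)).
Proof.
move=> HX HY H x y Px Py; split; first exact: H.
move=> h; case: (lin_tri HX x y) => [//|[e|h']].
  by subst; case: (lin_irr HY h).
by case: (lin_asym HY h (H _ _ Py Px h')).
Qed.

Lemma rat_lin : strict_linear rat_lt.
Proof.
rewrite /rat_lt; split; [|split].
- by move=> x; rewrite Order.POrderTheory.ltxx.
- move=> x y z; exact: Order.POrderTheory.lt_trans.
- move=> x y; case: (Order.TotalTheory.ltgtP x y) => h; [by left|by right; right|by right; left].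
Qed.

Lemma count_into_Q (X : Type) (lt : X -> X -> Prop) (B : X -> Prop) :
  strict_linear lt -> countable_set B ->
  exists q : X -> rat, forall x y, B x -> B y -> (lt x y <-> rat_lt (q x) (q y)).
Proof.
move=> HX [g hg].
pose R i j := exists x y, B x /\ B y /\ g x = i /\ g y = j /\ lt x y.
have Rtr : forall i j k, R i j -> R j k -> R i k.
  move=> i j k [x [y [Bx [By [<- [<- l1]]]]]] [y' [z [By' [Bz [e [<- l2]]]]]].
  have ey := hg _ _ By' By e; subst y'.
  exists x, z; do 4 split => //; exact: (@lin_trans X lt HX x y z l1 l2).
have Rirr : forall i, ~ R i i.
  move=> i [x [y [Bx [By [e1 [e2 l]]]]]].
  have e : x = y by apply: hg; rewrite ?e1 ?e2.
  by move: l; rewrite e; apply: (lin_irr HX).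
have [v hv] := @nat_into_Q R Rtr Rirr.
exists (fun x => v (g x)); apply: mono_iff => //; first exact: rat_lin.
move=> x y Bx By l; apply: hv; by exists x, y.
Qed.

Lemma lex_lin (M L : Type) (ltM : M -> M -> Prop) (ltL : L -> L -> Prop) :
  strict_linear ltM -> strict_linear ltL -> strict_linear (lex_lt ltM ltL).
Proof.
move=> HM HL; rewrite /lex_lt; split; [|split].
- move=> [m l] /= [h|[_ h]]; [exact: (lin_irr HM h)|exact: (lin_irr HL h)].
- move=> [a1 a2] [b1 b2] [c1 c2] /=.
  case=> [h|[e h]]; case=> [h'|[e' h']]; subst.
  + left; exact (lin_trans HM h h').
  + by left.
  + by left.
  + right; split => //; exact (lin_trans HL h h').
- move=> [a1 a2] [b1 b2] /=.
  case: (lin_tri HM a1 b1) => [h|[e|h]]; [by left; left| |by right; right; left].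
  subst; case: (lin_tri HL a2 b2) => [h|[e|h]].
  + by left; right.
  + by subst; right; left.
  + by right; right; right.
Qed.

Lemma sum_lin (A B : Type) (ltA : A -> A -> Prop) (ltB : B -> B -> Prop) :
  strict_linear ltA -> strict_linear ltB -> strict_linear (sum_lt ltA ltB).
Proof.
move=> HA HB; split; [|split].
- move=> [a|b] /=; [exact: (lin_irr HA)|exact: (lin_irr HB)].
- move=> [a|b] [a'|b'] [a''|b''] //=; [exact: (lin_trans HA)|exact: (lin_trans HB)].
- move=> [a|b] [a'|b'] /=; try tauto.
  + case: (lin_tri HA a a') => [|[->|]]; tauto.
  + case: (lin_tri HB b b') => [|[->|]]; tauto.
Qed.

Lemma ptQ_lin : strict_linear ptQ_lt.
Proof.
have H := rat_lin.
split; [|split].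
- move=> [q|] //= h; exact (lin_irr H h).
- move=> [q|] [q'|] [q''|] //= h1 h2; exact (lin_trans H h1 h2).
- move=> [q|] [q'|] /=; try tauto.
  case: (lin_tri H q q') => [|[->|]]; tauto.
Qed.

Section U.
Variables (W : Type) (ltW : W -> W -> Prop) (HW : is_omega1 ltW).

Lemma R_lin : strict_linear (R_lt ltW).
Proof. apply: lex_lin; [exact: (W_lin HW)|exact: ptQ_lin]. Qed.

Lemma U_lin : strict_linear (U_lt ltW).
Proof.
apply: sum_lin; first exact: rev_lin R_lin.
apply: sum_lin; [exact: rat_lin|exact: R_lin].
Qed.

Definition sigU (z : U_type W) : U_type W :=
  match z with
  | inl a => inr (inr a)
  | inr (inl q) => inr (inl (- q)%R)
  | inr (inr a) => inl a
  end.

Lemma sigU_rev x y : U_lt ltW x y <-> U_lt ltW (sigU y) (sigU x).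
Proof.
case: x => [a|[q|a]]; case: y => [a'|[q'|a']] //=.
rewrite /rat_lt Num.Theory.ltrN2 //.
Qed.

Lemma embed_rev (X : Type) (lt : X -> X -> Prop) :
  order_embeds (rev_lt lt) (U_lt ltW) -> order_embeds lt (U_lt ltW).
Proof.
move=> [e he]; exists (fun x => sigU (e x)) => x y.
by rewrite -sigU_rev -he.
Qed.

End U.
Section Blocks.
Variables (W : Type) (ltW : W -> W -> Prop) (HW : is_omega1 ltW).

Lemma blocks (X : Type) (lt : X -> X -> Prop) (f : W -> X) (P : X -> Prop) :
  strict_linear lt ->
  (forall x, P x -> exists w, lt x (f w)) ->
  (forall w, countable_set (fun x => P x /\ lt x (f w))) ->
  exists e : X -> W * option rat,
    forall x y, P x -> P y -> (lt x y <-> R_lt ltW (e x) (e y)).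
Proof.
move=> HX cof cnt.
have [w0 _] := W_inh HW.
have iW : inhabited W by constructor.
pose A x := fun w => P x -> lt x (f w) /\ forall v, ltW v w -> ~ lt x (f v).
pose alpha x := epsilon iW (A x).
have halpha : forall x, P x -> lt x (f (alpha x)) /\
    forall v, ltW v (alpha x) -> ~ lt x (f v).
  move=> x Px; apply: (epsilon_spec iW (A x)) => //.
  have [w [hw hm]] := W_min HW (cof x Px).
  by exists w => _; split.
pose B w x := P x /\ alpha x = w.
have iQ : inhabited (X -> rat) by constructor; exact: (fun _ => 0%R).
pose QQ w := fun q : X -> rat =>
  forall x y, B w x -> B w y -> (lt x y <-> rat_lt (q x) (q y)).
pose qq w := epsilon iQ (QQ w).
have hqq : forall w, QQ w (qq w).
  move=> w; apply: (epsilon_spec iQ (QQ w)); apply: count_into_Q => //.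
  apply: count_sub (cnt w) => x [Px <-]; split => //; exact: (proj1 (halpha x Px)).
exists (fun x => (alpha x, Some (qq (alpha x) x))).
apply: mono_iff => //; first exact: R_lin.
move=> x y Px Py lxy; rewrite /R_lt /lex_lt /=.
have [hx mx] := halpha x Px; have [hy my] := halpha y Py.
case: (lin_tri (W_lin HW) (alpha x) (alpha y)) => [h|[e|h]].
- by left.
- right; split => //=; rewrite -e; apply/(hqq (alpha x)) => //.
- exfalso; apply: (mx _ h); exact (lin_trans HX lxy hy).
Qed.

Lemma embed_incr (X : Type) (lt : X -> X -> Prop) (f : W -> X) :
  strict_linear lt -> AllC lt -> incr ltW lt f -> order_embeds lt (U_lt ltW).
Proof.
move=> HX hA fi.
have [w0 _] := W_inh HW.
pose b := f w0.
have [eR heR] := @blocks X lt f (fun x => ~ lt x b) HX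
  (fun x _ => incr_cof HX HW hA fi x)
  ltac:(move=> w; apply: count_sub (hA b (f w)) => x [nx lx]; left;
        split; [exact: (lin_nlt HX nx)|by left]).
have iU : inhabited (U_type W) by constructor; exact: (inr (inl 0%R)).
have ltb_dec : forall x y, lt x b -> ~ lt y b -> lt x y.
  move=> x y hx hy; have := lin_nlt HX hy; case=> [h|<-] //; exact (lin_trans HX hx h).
case: (classic (countable_set (fun x => lt x b))) => cH.
- have [qH hqH] := count_into_Q HX cH.
  pose E := fun x => if dec (lt x b) then inr (inl (qH x)) else inr (inr (eR x)) : U_type W.
  exists E; move=> x y.
  apply: (@mono_iff _ _ lt (U_lt ltW) (fun _ => True) E) => //; first exact: U_lin.
  move=> {}x {}y _ _ lxy; rewrite /E.
  case: (classic (lt x b)) => hx; case: (classic (lt y b)) => hy.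
  + rewrite (decT hx) (decT hy) /=; exact/hqH.
  + by rewrite (decT hx) (decF hy) /U_lt /=.
  + by case: hx; exact (lin_trans HX lxy hy).
  + rewrite (decF hx) (decF hy) /=; exact/heR.
-
  have HXr := rev_lin HX.
  have below : forall C, countable_set C -> (forall c, C c -> lt c b) ->
      exists x, lt x b /\ forall c, C c -> rev_lt lt c x.
    move=> C cC CH; apply: NNPP => nx; apply: cH.
    apply: (@count_sub _ _ (fun x => exists c, C c /\ cint lt c b x)).
      move=> x hx; apply: NNPP => nc; apply: nx; exists x; split => // c Cc.
      apply: NNPP => nl; apply: nc; exists c; split => //.
      left; split; [exact: (lin_nlt HX nl)|by left].
    apply: count_bigU => // c _; exact: hA.
  have [g [gH gi]] := @rec_seq W ltW HW X (rev_lt lt) (fun x => lt x b) below.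
  have [eL heL] := @blocks X (rev_lt lt) g (fun x => lt x b) HXr
    (fun x _ => incr_cof HXr HW (AllC_rev hA) gi x)
    ltac:(move=> w; apply: count_sub (hA (g w) b) => x [hx lx]; left;
          split; [by left|by left]).
  pose E := fun x => if dec (lt x b) then inl (eL x) else inr (inr (eR x)) : U_type W.
  exists E; move=> x y.
  apply: (@mono_iff _ _ lt (U_lt ltW) (fun _ => True) E) => //; first exact: U_lin.
  move=> {}x {}y _ _ lxy; rewrite /E.
  case: (classic (lt x b)) => hx; case: (classic (lt y b)) => hy.
  + rewrite (decT hx) (decT hy) /=.
    exact/(heL y x).
  + by rewrite (decT hx) (decF hy) /U_lt /=.
  + by case: hx; exact (lin_trans HX lxy hy).
  + rewrite (decF hx) (decF hy) /=; exact/heR.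
Qed.

End Blocks.
Section UCount.
Variables (W : Type) (ltW : W -> W -> Prop) (HW : is_omega1 ltW).

Definition coordU (z : U_type W) : option W :=
  match z with
  | inl (a, _) => Some a
  | inr (inl _) => None
  | inr (inr (a, _)) => Some a
  end.

Definition KS (C : W -> Prop) (z : U_type W) : Prop :=
  match coordU z with
  | None => True
  | Some a => exists c, C c /\ leo ltW a c
  end.

Lemma KS_count C : countable_set C -> countable_set (KS C).
Proof.
move=> cC.
have cA : countable_set (fun a => exists c, C c /\ leo ltW a c).
  apply: count_bigU => // c _; apply: count_union; last exact: count_single.
  by case: HW => _ [_].
case: cA => gA hA.
apply: (@count_type _ (nat * nat * option rat)%type _
  (fun z => match z with
            | inl (a, o) => (0%N, gA a, o)
            | inr (inl q) => (1%N, 0%N, Some q)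
            | inr (inr (a, o)) => (2%N, gA a, o)
            end)).
move=> [[a o]|[q|[a o]]] [[a' o']|[q'|[a' o']]] //= Ka Kb; try by case.
- by case=> /(hA _ _ Ka Kb) -> ->.
- by case=> ->.
- by case=> /(hA _ _ Ka Kb) -> ->.
Qed.

Lemma U_le_inl x a o : leo (U_lt ltW) x (inl (a, o)) ->
  exists a' o', x = inl (a', o') /\ leo ltW a a'.
Proof.
case=> [|->]; last by exists a, o; split => //; right.
case: x => [[a' o']|[q|[a' o']]] //= h; exists a', o'; split => //.
by case: h => [/= h|[/= -> _]]; [left|right].
Qed.

Lemma U_le_inr x a o : leo (U_lt ltW) (inr (inr (a, o))) x ->
  exists a' o', x = inr (inr (a', o')) /\ leo ltW a a'.
Proof.
case=> [|<-]; last by exists a, o; split => //; right.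
case: x => [[a' o']|[q|[a' o']]] //= h; exists a', o'; split => //.
by case: h => [/= h|[/= -> _]]; [left|right].
Qed.

Lemma U_cint_K x y z : cint (U_lt ltW) x y z ->
  KS (fun c => coordU x = Some c \/ coordU y = Some c) z.
Proof.
rewrite /KS; case: z => [[a o]|[q|[a o]]] //= h.
- have H1 : forall p, leo (U_lt ltW) p (inl (a, o)) ->
      exists c, coordU p = Some c /\ leo ltW a c.
    by move=> p /U_le_inl [a' [o' [-> l]]]; exists a'.
  case: h => [[h _]|[h _]]; have [c [e l]] := H1 _ h; exists c; tauto.
- have H1 : forall p, leo (U_lt ltW) (inr (inr (a, o))) p ->
      exists c, coordU p = Some c /\ leo ltW a c.
    by move=> p /U_le_inr [a' [o' [-> l]]]; exists a'.
  case: h => [[_ h]|[_ h]]; have [c [e l]] := H1 _ h; exists c; tauto.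
Qed.

Lemma U_AllC : AllC (U_lt ltW).
Proof.
move=> x y; apply: count_sub (@U_cint_K x y) _; apply: KS_count.
have sub1 : forall p : U_type W, countable_set (fun c => coordU p = Some c).
  move=> p; exists (fun _ => 0%N) => a b -> [] //.
exact: count_union.
Qed.

End UCount.
Section P45.
Variables (W : Type) (ltW : W -> W -> Prop) (HW : is_omega1 ltW).
Variables (L : Type) (ltL : L -> L -> Prop) (HL : strict_linear ltL).

Lemma embed_inj (e : L -> U_type W) :
  (forall x y, ltL x y <-> U_lt ltW (e x) (e y)) ->
  forall x y, e x = e y -> x = y.
Proof.
move=> he x y exy; case: (lin_tri HL x y) => [h|[//|h]]; exfalso;
  move/he: h; rewrite exy => h; exact (lin_irr (U_lin HW) h).
Qed.

Lemma embed_AllC : order_embeds ltL (U_lt ltW) -> AllC ltL.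
Proof.
move=> [e he] x y.
have hle : forall a b, leo ltL a b -> leo (U_lt ltW) (e a) (e b).
  by move=> a b [h|->]; [left; apply/he|right].
apply: (@count_preim _ _ _ (cint (U_lt ltW) (e x) (e y)) e).
- move=> z [[h1 h2]|[h1 h2]]; [left|right]; split; exact: hle.
- move=> a b _ _; exact: embed_inj.
- exact: U_AllC.
Qed.

Lemma p4_p5 : order_embeds ltL (U_lt ltW) ->
  (exists f : W -> L, incr ltW ltL f \/ decr ltW ltL f) ->
  exists S : U_type W -> Prop, ~ countable_set S /\
    order_iso ltL (@sub_lt _ (U_lt ltW) S).
Proof.
move=> [e he] [f hf].
have finj : forall a b, f a = f b -> a = b.
  case: hf => hf; [exact: (incr_inj HL HW hf)|exact: (incr_inj (rev_lin HL) HW hf)].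
exists (fun z => exists x, e x = z); split.
  move=> cS; case: HW => _ [nc _]; apply: nc.
  apply: (@count_preim _ _ _ _ (fun w => e (f w))) cS.
  - by move=> a _; exists (f a).
  - move=> a b _ _ h; apply: finj; exact: (embed_inj he h).
exists (fun x => exist _ (e x) (ex_intro _ x erefl)); split; [|split].
- move=> x y h; apply: (embed_inj he); exact: (f_equal (@proj1_sig _ _) h).
- move=> [z p]; case: (p) => x ex; exists x; subst z.
  by rewrite (proof_irrelevance _ (ex_intro _ x erefl) p).
- move=> x y; rewrite /sub_lt /=; exact: he.
Qed.

Definition isR (z : U_type W) := exists a o, z = inr (inr (a, o)).
Definition isS (z : U_type W) := exists a o, z = inl (a, o).

Lemma p5_p4 : (exists S : U_type W -> Prop, ~ countable_set S /\
    order_iso ltL (@sub_lt _ (U_lt ltW) S)) ->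
  order_embeds ltL (U_lt ltW) /\
  (exists f : W -> L, incr ltW ltL f \/ decr ltW ltL f).
Proof.
move=> [S [nS [phi [phi_i [phi_s phi_o]]]]].
pose e x := proj1_sig (phi x).
have he : forall x y, ltL x y <-> U_lt ltW (e x) (e y) by [].
split; first by exists e.
have einj := embed_inj he.
have [w0 _] := W_inh HW.
have bnd : forall C : L -> Prop, countable_set C ->
    countable_set (fun x => exists c, C c /\
      ((isR (e x) /\ leo ltL x c) \/ (isS (e x) /\ leo ltL c x))).
  move=> C cC.
  pose C' := fun a => exists y, C y /\ coordU (e y) = Some a.
  have cC' : countable_set C'.
    apply: (@count_preim _ _ _ (fun o => exists y, C y /\ coordU (e y) = o) Some).
    - by move=> a [y [Cy hy]]; exists y.
    - by move=> a b _ _ [].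
    - exact: count_image.
  apply: (@count_preim _ _ _ (KS ltW C') e); last exact: KS_count.
  - move=> x [c [Cc [[[a [o ex]] lxc]|[[a [o ex]] lcx]]]].
    + have : leo (U_lt ltW) (e x) (e c) by case: lxc => [h|->]; [left; apply/he|right].
      rewrite ex => H; have [a' [o' [ec la]]] := U_le_inr H.
      rewrite /KS /=; exists a'; split => //; exists c; by rewrite ec.
    + have : leo (U_lt ltW) (e c) (e x) by case: lcx => [h|->]; [left; apply/he|right].
      rewrite ex => H; have [a' [o' [ec la]]] := U_le_inl H.
      rewrite /KS /=; exists a'; split => //; exists c; by rewrite ec.
  - by move=> a b _ _; apply: einj.
case: (classic (countable_set (fun x => isR (e x)))) => cR;
  last first.
  have above : forall C, countable_set C -> (forall c, C c -> isR (e c)) ->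
      exists x, isR (e x) /\ forall c, C c -> ltL c x.
    move=> C cC CR; apply: NNPP => nx; apply: cR.
    apply: count_sub (bnd C cC) => x Rx.
    apply: NNPP => nc; apply: nx; exists x; split => // c Cc.
    apply: NNPP => nl; apply: nc; exists c; split => //; left; split => //.
    exact: (lin_nlt HL nl).
  have [f [_ fi]] := rec_seq HW above.
  by exists f; left.
case: (classic (countable_set (fun x => isS (e x)))) => cSS;
  last first.
  have above : forall C, countable_set C -> (forall c, C c -> isS (e c)) ->
      exists x, isS (e x) /\ forall c, C c -> rev_lt ltL c x.
    move=> C cC CR; apply: NNPP => nx; apply: cSS.
    apply: count_sub (bnd C cC) => x Rx.
    apply: NNPP => nc; apply: nx; exists x; split => // c Cc.
    apply: NNPP => nl; apply: nc; exists c; split => //; right; split => //.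
    exact: (lin_nlt HL nl).
  have [f [_ fi]] := rec_seq HW above.
  by exists f; right.
exfalso; apply: nS.
have cL : countable_set (fun _ : L => True).
  have cQ : countable_set (fun x => exists q, e x = inr (inl q)).
    apply: (@count_type _ rat _ (fun x => match e x with
                                          | inr (inl q) => q | _ => 0%R end)).
    move=> a b [q ea] [q' eb]; rewrite ea eb => eq; apply: einj.
    by rewrite ea eb eq.
  apply: (@count_sub _ _ (fun x => (isR (e x) \/ isS (e x)) \/
                                   exists q, e x = inr (inl q))).
    move=> x _; case: (e x) => [[a o]|[q|[a o]]].
    + by left; right; exists a, o.
    + by right; exists q.
    + by left; left; exists a, o.
  by apply: count_union => //; apply: count_union.
apply: (@count_sub _ _ (fun z => exists x, (fun _ => True) x /\ e x = z)).
  move=> z Sz; have [x hx] := phi_s (exist _ z Sz); exists x; split => //.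
  by rewrite /e hx.
exact: count_image.
Qed.

End P45.
Lemma head_rev (X : Type) (lt : X -> X -> Prop) (H : X -> Prop) :
  is_head lt H <-> is_tail (rev_lt lt) H.
Proof. rewrite /is_head /is_tail /rev_lt; split => [[h1 h2]|[h1 h2]]; split => // x y; eauto. Qed.

Lemma cint_sym (X : Type) (lt : X -> X -> Prop) x y z :
  cint lt x y z -> cint lt y x z.
Proof. rewrite /cint; tauto. Qed.

Section QuotLex.
Variables (M : Type) (ltM : M -> M -> Prop) (HM : strict_linear ltM).
Variables (L : Type) (ltL : L -> L -> Prop) (HL : strict_linear ltL).
Hypothesis iL : exists l : L, True.
Hypothesis hA : AllC ltL.
Hypothesis hTH : (forall T, is_tail ltL T -> ~ countable_set T) \/
                 (forall H, is_head ltL H -> ~ countable_set H).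

Let lx := lex_lt ltM ltL.

Lemma lex_same m l l' z : leo lx (m, l) z -> leo lx z (m, l') ->
  z.1 = m /\ leo ltL l z.2 /\ leo ltL z.2 l'.
Proof.
case: z => [m1 l1]; rewrite /lx /leo /lex_lt /= => H1 H2.
case: H1 => [[h|[e h]]|e]; case: H2 => [[h'|[e' h']]|e3];
  try (case: e => e1 e2); try (case: e3 => e3 e4); subst; try tauto.
all: first [ by case: (lin_asym HM h h') | by case: (lin_irr HM h)
           | by case: (lin_irr HM h') ].
Qed.

Lemma csim_same p q : p.1 = q.1 -> csim lx p q.
Proof.
case: p q => [m l] [m' l'] /= e; subst m'.
apply: (@count_preim _ _ _ (cint ltL l l') snd).
- move=> z [[h1 h2]|[h1 h2]].
  + have [_ [a b]] := lex_same h1 h2; by left.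
  + have [_ [a b]] := lex_same h1 h2; by right.
- move=> [a1 a2] [b1 b2] [[h1 h2]|[h1 h2]] [[h3 h4]|[h3 h4]] /= e; subst;
    do 2 (match goal with H : leo _ _ _ |- _ => idtac end);
    first [ have [ea _] := lex_same h1 h2 | have [ea _] := lex_same h2 h1 ];
    first [ have [eb _] := lex_same h3 h4 | have [eb _] := lex_same h4 h3 ];
    simpl in ea, eb; by subst.
- exact: hA.
Qed.

Lemma ncsim_lt p q : ltM p.1 q.1 -> ~ csim lx p q.
Proof.
case: p q => [m l] [m' l'] /= h c.
case: hTH => hT.
- apply: (hT (fun z => leo ltL l z)).
    split; first by exists l; right.
    move=> x y [h1|<-] h2; left => //; exact (lin_trans HL h1 h2).
  apply: (@count_preim _ _ _ _ (fun z => (m, z))); last exact: c.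
  + move=> z hz; left; split.
      case: hz => [hz|<-]; [left; right; split|right] => //.
    by left; left.
  + by move=> a b _ _ [].
- apply: (hT (fun z => leo ltL z l')).
    split; first by exists l'; right.
    move=> x y [h1|->] h2; left => //; exact (lin_trans HL h2 h1).
  apply: (@count_preim _ _ _ _ (fun z => (m', z))); last exact: c.
  + move=> z hz; left; split; first by left; left.
    case: hz => [hz|->]; [left; right; split|right] => //.
  + by move=> a b _ _ [].
Qed.

Lemma csim_lex p q : csim lx p q <-> p.1 = q.1.
Proof.
split; last exact: csim_same.
move=> c; case: (lin_tri HM p.1 q.1) => [h|[//|h]].
- by case: (ncsim_lt h).
- case: (ncsim_lt h); apply: count_sub c => z; exact: cint_sym.
Qed.

Lemma quot_lex : cquot_iso lx ltM.
Proof.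
pose rep (C : cclass lx) := proj1_sig (constructive_indefinite_description _ (proj2_sig C)).
have hrep : forall C, proj1_sig C = csim lx (rep C).
  move=> C; exact: (proj2_sig (constructive_indefinite_description _ (proj2_sig C))).
have memC : forall (C : cclass lx) z, proj1_sig C z <-> (rep C).1 = z.1.
  by move=> C z; rewrite hrep; exact: csim_lex.
have ceq : forall C D : cclass lx, (rep C).1 = (rep D).1 -> C = D.
  move=> C D e.
  have e' : proj1_sig C = proj1_sig D.
    apply: functional_extensionality => z; apply: propositional_extensionality.
    by rewrite !memC e.
  case: C D e' {e} => [c pc] [d pd] /= e'; subst d.
  by rewrite (proof_irrelevance _ pc pd).
exists (fun C => (rep C).1); split; [|split].
- move=> C D; exact: ceq.
- move=> m; case: iL => l _.
  exists (exist _ (csim lx (m, l)) (ex_intro _ (m, l) erefl)).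
  have := proj1 (memC (exist _ (csim lx (m, l)) (ex_intro _ (m, l) erefl)) (m, l)).
  apply => /=; exact: csim_same.
- move=> C D; split.
  + move=> [ne [x [y [Cx [Dy lxy]]]]].
    move/memC: Cx => ex; move/memC: Dy => ey.
    rewrite ex ey; case: lxy => [//|[e _]].
    by case: ne; rewrite (ceq C D) // ex ey.
  + move=> h; split.
      move=> e; have e2 : C = D.
        by case: C D e {h} => [c pc] [d pd] /= e; subst d;
           rewrite (proof_irrelevance _ pc pd).
      by subst D; case: (lin_irr HM h).
    exists (rep C), (rep D); split; [|split].
    * by apply/memC.
    * by apply/memC.
    * by left.
Qed.

End QuotLex.
Lemma AllC_cls_eq (X : Type) (lt : X -> X -> Prop) :
  AllC lt -> forall C D : cclass lt, C = D.
Proof.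
move=> hA [C pC] [D pD].
have e : C = D.
  case: pC => x ->; case: pD => y ->.
  apply: functional_extensionality => z; apply: propositional_extensionality.
  by split => _; apply: hA.
subst D; by rewrite (proof_irrelevance _ pC pD).
Qed.

Lemma one_lin : strict_linear one_lt.
Proof. split; [by move=> []|split; [by []|by move=> [] []; right; left]]. Qed.

Lemma nat_lin : strict_linear (fun a b : nat => (a < b)%N).
Proof.
split; [|split].
- by move=> x; rewrite ltnn.
- move=> x y z; exact: ltn_trans.
- move=> x y; case: (ltngtP x y) => h; [by left|by right; right|by right; left].
Qed.

Section P13.
Variables (L : Type) (ltL : L -> L -> Prop) (HL : strict_linear ltL).

Lemma p1_p3 : (forall (M : Type) (ltM : M -> M -> Prop), strict_linear ltM ->
              cquot_iso (lex_lt ltM ltL) ltM) ->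
  cquot_iso ltL one_lt /\
  ((forall T, is_tail ltL T -> ~ countable_set T) \/
   (forall H, is_head ltL H -> ~ countable_set H)).
Proof.
move=> P1.
have [[[u l0] _] hA1] := cquot_one_inv (lex_lin one_lin HL) (P1 _ _ one_lin).
have hA : AllC ltL.
  move=> x y; apply: (@count_preim _ _ _ (cint (lex_lt one_lt ltL) (tt, x) (tt, y))
                     (fun l => (tt, l))); last exact: hA1.
  - have hle : forall a b, leo ltL a b -> leo (lex_lt one_lt ltL) (tt, a) (tt, b).
      by move=> a b [h|->]; [left; right|right].
    move=> z [[h1 h2]|[h1 h2]]; [left|right]; split; exact: hle.
  - by move=> a b _ _ [].
split; first by apply: cquot_one => //; exists l0.
apply: NNPP => nd.
have [T [tT cT]] : exists T, is_tail ltL T /\ countable_set T.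
  apply: NNPP => nT; apply: nd; left => T tT cT; apply: nT; by exists T.
have [H [hH cH]] : exists H, is_head ltL H /\ countable_set H.
  apply: NNPP => nH; apply: nd; right => H hH cH; apply: nH; by exists H.
have cL : countable_set (fun _ : L => True).
  case: (tT) => [[t Tt] Tc]; case: (hH) => [[h Hh] Hc].
  apply: (@count_sub _ _ (fun x => (H x \/ cint ltL h t x) \/ T x)).
    move=> x _; case: (classic (H x)) => Hx; first by left; left.
    case: (classic (T x)) => Tx; first by right.
    left; right; left; split.
    + apply: (lin_nlt HL) => l; apply: Hx; exact: Hc l.
    + apply: (lin_nlt HL) => l; apply: Tx; exact: Tc l.
  apply: count_union => //; apply: count_union => //; exact: hA.
have [F [_ [Fs _]]] := P1 _ _ nat_lin.
case: cL => gL hgL.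
have hAn : AllC (lex_lt (fun a b : nat => (a < b)%N) ltL).
  move=> x y; apply: (@count_type _ (nat * nat)%type _ (fun p => (p.1, gL p.2))).
  move=> [a1 a2] [b1 b2] _ _ [/= -> e]; by rewrite (hgL _ _ I I e).
have [C0 e0] := Fs 0%N; have [C1 e1] := Fs 1%N.
by move: e0 e1; rewrite (AllC_cls_eq hAn C0 C1) => -> .
Qed.

End P13.

Unset Implicit Arguments.

Theorem theorem4p5
  (W : Type) (ltW : W -> W -> Prop) (HW : is_omega1 ltW)
  (L : Type) (ltL : L -> L -> Prop) (HL : strict_linear ltL) :
  let P1 := forall (M : Type) (ltM : M -> M -> Prop), strict_linear ltM ->
              cquot_iso (lex_lt ltM ltL) ltM in
  let P2 := cquot_iso ltL one_lt /\
            (cf_omega1 ltW ltL \/ cfstar_omega1 ltW ltL) in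
  let P3 := cquot_iso ltL one_lt /\
            ((forall T, is_tail ltL T -> ~ countable_set T) \/
             (forall H, is_head ltL H -> ~ countable_set H)) in
  let P4 := order_embeds ltL (U_lt ltW) /\
            (exists f : W -> L, incr ltW ltL f \/ decr ltW ltL f) in
  let P5 := exists S : U_type W -> Prop, ~ countable_set S /\
              order_iso ltL (@sub_lt _ (U_lt ltW) S) in
  (P1 <-> P2) /\ (P2 <-> P3) /\ (P3 <-> P4) /\ (P4 <-> P5).
Proof.
move=> P1 P2 P3 P4 P5.
have HLr := rev_lin HL.
have p2p1 : P2 -> P1.
  move=> [hq hc] M ltM HM.
  have [iL hA] := cquot_one_inv HL hq.
  apply: quot_lex => //.
  case: hc => hc; [left|right].
  - exact: (cf_tails HL HW hA hc).
  - move=> H /head_rev hH; exact: (cf_tails HLr HW (AllC_rev hA) hc hH).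
have p3p2 : P3 -> P2.
  move=> [hq ht]; split => //.
  have [iL hA] := cquot_one_inv HL hq.
  case: ht => ht; [left|right].
  - exact: (tails_cf HL HW iL hA ht).
  - apply: (tails_cf HLr HW iL (AllC_rev hA)) => T /head_rev; exact: ht.
have p1p3 : P1 -> P3 := p1_p3 HL.
have p2p4 : P2 -> P4.
  move=> [hq hc]; have [iL hA] := cquot_one_inv HL hq.
  case: hc => [[[f [fi _]] _]|[[f [fi _]] _]].
  - split; [exact: (embed_incr HW HL hA fi)|by exists f; left].
  - split; last by exists f; right.
    apply: embed_rev; exact: (embed_incr HW HLr (AllC_rev hA) fi).
have p4p3 : P4 -> P3.
  move=> [he [f hf]].
  have hA := embed_AllC HW HL he.
  split; first by have [w0 _] := W_inh HW; apply: cquot_one => //; exists (f w0).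
  case: hf => hf; [left|right].
  - exact: (incr_tail HL HW hA hf).
  - move=> H /head_rev hH; exact: (incr_tail HLr HW (AllC_rev hA) hf hH).
split; [|split; [|split]].
- split; [move=> /p1p3 /p3p2 //|exact: p2p1].
- split; [move=> /p2p1 /p1p3 //|exact: p3p2].
- split; [move=> /p3p2 /p2p4 //|exact: p4p3].
- split; [move=> [he hf]; exact: (p4_p5 HW HL he hf)|exact: (p5_p4 HW HL)].
Qed.
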